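(* Let $\overrightarrow{G}$ be a digraph of order $n$ with no weakly connected components of order less than $4$. Then $\overrightarrow{G}$ has a $\Gamma$-irregular labeling for every finite Abelian group $\Gamma$ such that $|\Gamma|\ge 2n+1$.
   Context: For a digraph $\overrightarrow{G}=(V,A)$ and a finite Abelian group $\Gamma$, a labeling $\psi\colon A\to\Gamma$ is $\Gamma$-irregular if the map $\varphi_\psi\colon V\to\Gamma$, $\varphi_\psi(x)=\sum_{y\in N^-(x)}\psi((y,x))-\sum_{y\in N^+(x)}\psi((x,y))$, is injective (here $N^-(x)$ and $N^+(x)$ are the in- and out-neighbourhoods of $x$). A weakly connected component of $\overrightarrow{G}$ is the subdigraph induced by the vertex set of a connected component of the underlying undirected graph of $\overrightarrow{G}$. *)

(* Defs.v *)
From mathcomp Require Import all_boot all_algebra.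
Set Implicit Arguments. Unset Strict Implicit. Unset Printing Implicit Defensive.
Import GRing.Theory.
Local Open Scope ring_scope.

(* A digraph on the finite vertex type V is given by its arc relation
   [a : rel V]: (x,y) is an arc iff [a x y]. Digraphs have no loops. *)
Definition loopless (V : finType) (a : rel V) : Prop := forall x, ~~ a x x.

Definition underlying (V : finType) (a : rel V) : rel V :=
  fun x y => a x y || a y x.

Definition wcomp (V : finType) (a : rel V) (x : V) : {set V} :=
  [set y | connect (underlying a) x y].

(* a labeling psi assigns psi x y to the arc (x,y); values on non-arcs are
   irrelevant.  phi(x) = sum over in-arcs minus sum over out-arcs. *)
Definition weight (V : finType) (a : rel V) (G : zmodType) (psi : V -> V -> G)
  (x : V) : G :=
  \sum_(y | a y x) psi y x - \sum_(y | a x y) psi x y.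

Definition irregular_labeling (V : finType) (a : rel V) (G : zmodType)
  (psi : V -> V -> G) : Prop :=
  injective (weight a psi).

(* Main.v *)
Require Import Defs.
From mathcomp Require Import all_boot all_algebra.
From mathcomp Require Import zify.

Section Helpers.
Set Implicit Arguments. Unset Strict Implicit. Unset Printing Implicit Defensive.
Import GRing.Theory.
Local Open Scope ring_scope.

Lemma triple (G : finZmodType) (U : {set G}) (t : G) :
  (#|G| + 7 <= 2 * #|U|)%N ->
  exists x y z, [/\ x \in U, y \in U, z \in U, [&& x != y, y != z & x != z] & x + y + z = t].
Proof.
move=> hU.
pose good (p : G * G) := [&& p.1 \in U, p.2 \in U, t - p.1 - p.2 \in U,
   p.1 != p.2, p.2 != t - p.1 - p.2 & p.1 != t - p.1 - p.2].
case: (boolP [exists p, good p]) => [/existsP[[x y]]|].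
  case/and5P => /= xU yU zU xy /andP[yz xz].
  exists x, y, (t - x - y); split => //; first by rewrite xy yz.
  by rewrite -[t - x - y]addrA -opprD addrC addNKr.
rewrite negb_exists => /forallP nog; exfalso.
pose T := [set p : G * G | [&& p.1 \in U, p.2 \in U & t - p.1 - p.2 \in U]].
have low : (#|U| * (2 * #|U| - #|G|) <= #|T|)%N.
  rewrite -[#|T|]sum1_card big_mkcond /=.
  rewrite (eq_bigr (fun p : G * G => if (p.1, p.2) \in T then 1%N else 0%N)); last by case.
  rewrite -(pair_bigA _ (fun x y => if (x, y) \in T then 1%N else 0%N)) /=.
  rewrite -sum_nat_const [X in (X <= _)%N]big_mkcond /=; apply: leq_sum => x _.
  case: ifP => // xU.
  rewrite -big_mkcond /= sum1_card.
  rewrite (@eq_card _ _ (U :&: [set y | t - x - y \in U])); last first.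
    by move=> y; rewrite [RHS]inE; rewrite -[LHS]/((x, y) \in T) !inE /= xU.
  have inj : injective (fun y : G => t - x - y).
    by move=> y1 y2 /= /addrI /oppr_inj.
  have c2 : #|[set y | t - x - y \in U]| = #|U|.
    by rewrite -[RHS](card_preimset _ inj); apply: eq_card => y; rewrite !inE.
  have := cardsUI U [set y | t - x - y \in U]; rewrite c2.
  have := max_card (U :|: [set y | t - x - y \in U]).
  move=> h2 h1; rewrite leq_subLR mul2n -addnn -h1 leq_add2r; exact: h2.
have up : (#|T| <= 3 * #|U|)%N.
  pose B1 := [set (x, x) | x in U].
  pose B2 := [set (t - y - y, y) | y in U].
  pose B3 := [set (x, t - x - x) | x in U].
  have sub : T \subset B1 :|: B2 :|: B3.
    apply/subsetP => -[x y]; rewrite inE /= => /and3P[xU yU zU].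
    have := nog (x, y); rewrite /good /= xU yU zU /= => ng.
    case: (eqVneq x y) => [<-|xy].
      by rewrite !inE; apply/orP; left; apply/orP; left; apply/imsetP; exists x.
    case: (eqVneq y (t - x - y)) => [yz|yz].
      rewrite !inE; apply/orP; left; apply/orP; right; apply/imsetP; exists y => //.
      by congr (_, _); rewrite {2}yz opprB addrA subrK subKr.
    move: ng; rewrite xy yz /= => /negPn/eqP xz.
    rewrite !inE; apply/orP; right; apply/imsetP; exists x => //.
    by congr (_, _); rewrite {2}xz subKr.
  apply: (leq_trans (subset_leq_card sub)).
  rewrite cardsU; apply: (leq_trans (leq_subr _ _)).
  rewrite cardsU; apply: (leq_trans (leq_add (leq_subr _ _) (leqnn _))).
  rewrite !mulSn mul0n addn0 -addnA.
  apply: leq_add; first exact: leq_imset_card.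
  by apply: leq_add; exact: leq_imset_card.
have := leq_trans low up; nia.
Qed.

Lemma uniq_map_inj (T1 T2 : eqType) (f : T1 -> T2) (s : seq T1) :
  uniq (map f s) -> {in s &, injective f}.
Proof.
elim: s => [|x s IH] //= /andP[fx us] u v; rewrite !inE.
case/orP => [/eqP->|us'] /orP[/eqP->|vs] //.
- by move=> e; move: fx; rewrite e map_f.
- by move=> e; move: fx; rewrite -e map_f.
- exact: IH.
Qed.

Lemma pick3 (V : finType) (G : finZmodType) (r : seq V) (U : {set G}) (t : G) :
  uniq r -> (3 <= size r)%N -> (#|G| + 2 * size r + 1 <= 2 * #|U|)%N ->
  exists f : V -> G, [/\ uniq (map f r), {in r, forall x, f x \in U} & \sum_(x <- r) f x = t].
Proof.
elim: r U t => [|x r IH] U t //= /andP[xr ur] hs hU.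
case: (leqP 3 (size r)) => hr.
  have [u uU] : exists u, u \in U.
    have h0 : (0 < #|U|)%N by move: hU; move: (#|U|) => k; lia.
    by apply/set0Pn; rewrite -card_gt0.
  have hU' : (#|G| + 2 * size r + 1 <= 2 * #|U :\ u|)%N.
    move: hU; rewrite (cardsD1 u U) uU /=; move: (#|U :\ u|) => k; lia.
  have [f [f1 f2 f3]] := IH (U :\ u) (t - u) ur hr hU'.
  exists (fun v => if v == x then u else f v).
  have E : {in r, (fun v => if v == x then u else f v) =1 f}.
    by move=> v vr; case: eqP => // ev; move: xr; rewrite -ev vr.
  split.
  - have -> : map (fun v => if v == x then u else f v) r = map f r by apply/eq_in_map.
    rewrite /= eqxx f1 andbT; apply/mapP => -[v vr fv].
    by have := f2 v vr; rewrite -fv !inE eqxx.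
  - move=> v; rewrite inE => /orP[/eqP->|vr]; first by rewrite eqxx.
    by rewrite E //; have := f2 v vr; rewrite inE => /andP[].
  - by rewrite big_cons eqxx (eq_big_seq _ E) f3 addrC subrK.
case: r xr ur hs hU hr IH => [|y [|z [|w s]]] //= xr ur _ hU _ _.
have h7 : (#|G| + 7 <= 2 * #|U|)%N by move: hU; rewrite -addnA.
have [a' [b' [c' [aU bU cU /and3P[ab bc ac] s]]]] := triple t h7.
move: xr ur; rewrite !inE negb_or => /andP[xy xz] /andP[yz _].
have yx : (y == x) = false by apply/negbTE; rewrite eq_sym.
have zx : (z == x) = false by apply/negbTE; rewrite eq_sym.
have zy : (z == y) = false by apply/negbTE; rewrite eq_sym.
exists (fun v => if v == x then a' else if v == y then b' else c').
rewrite !big_cons big_nil /= eqxx yx zx zy eqxx !inE negb_or ab ac bc addr0 addrA s; split => //.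
by move=> v; rewrite !inE => /or3P[] /eqP ->; rewrite ?eqxx ?yx ?zx ?zy.
Qed.

Lemma zs (V : finType) (a : rel V) (G : finZmodType) :
  (forall x : V, 4 <= #|wcomp a x|)%N -> (2 * #|V| + 1 <= #|G|)%N ->
  exists w : V -> G, injective w /\ forall x, \sum_(y in wcomp a x) w y = 0.
Proof.
move=> hc hG.
have sym : connect_sym (underlying a).
  by apply: sym_connect_sym => x y; rewrite /underlying orbC.
pose e := underlying a.
have wcE x y : (y \in wcomp a x) = connect e x y by rewrite inE.
suff H : forall n (S : {set V}), (#|S| <= n)%N ->
   (forall x y, connect e x y -> (x \in S) = (y \in S)) ->
   exists w : V -> G, {in S &, injective w} /\
     forall x, x \in S -> \sum_(y in wcomp a x) w y = 0.
  have [w [w1 w2]] := H _ [set: V] (leqnn _) (fun x y _ => ltac:(by rewrite !inE)).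
  by exists w; split; [move=> y z; apply: w1; rewrite inE | move=> y; apply: w2; rewrite inE].
elim => [|n IH] S hS cS.
  exists (fun _ => 0); split => [x y|x]; move: hS; rewrite leqn0 cards_eq0 => /eqP ->;
    by rewrite inE.
case: (set_0Vmem S) => [-> | [x xS]].
  by exists (fun _ => 0); split => [y z|y]; rewrite inE.
pose C := wcomp a x.
pose S' := S :\: C.
have xC : x \in C by rewrite wcE connect0.
have CS : C \subset S.
  by apply/subsetP => y; rewrite wcE => /cS <-.
have hS' : (#|S'| <= n)%N.
  have : (#|S'| < #|S|)%N.
    by apply: proper_card; apply/properP; split; [exact: subsetDl | exists x; rewrite // !inE connect0].
  move: hS; move: (#|S|) (#|S'|) => k1 k2; lia.
have cS' : forall y z, connect e y z -> (y \in S') = (z \in S').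
  move=> y z yz; rewrite !inE (cS _ _ yz); congr (~~ _ && _).
  apply/idP/idP => h; first exact: connect_trans h yz.
  by apply: connect_trans h _; rewrite sym.
have [w' [w1 w2]] := IH S' hS' cS'.
pose U := ~: (w' @: S').
have cardS' : #|S'| = (#|S| - #|C|)%N.
  by rewrite cardsD (setIidPr CS).
have hU : (#|G| + 2 * size (enum C) + 1 <= 2 * #|U|)%N.
  rewrite -cardE.
  have := cardsC (w' @: S'); rewrite -/U.
  have := leq_imset_card w' S'.
  have := subset_leq_card CS.
  have := max_card (mem S).
  rewrite cardS'.
  move: hG; move: (#|G|) (#|V|) (#|S|) (#|C|) (#|w' @: S'|) (#|U|) => g v s c u uu.
  lia.
have h3 : (3 <= size (enum C))%N by rewrite -cardE; have := hc x; rewrite -/C; move: (#|C|) => k; lia.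
have [f [f1 f2 f3]] := @pick3 V G (enum C) U 0 (enum_uniq _) h3 hU.
have fU y : y \in C -> f y \in U by move=> yC; apply: f2; rewrite mem_enum.
have finj : {in C &, injective f}.
  by move=> y z yC zC /(uniq_map_inj f1); rewrite !mem_enum; apply.
have CE z : z \in C -> wcomp a z = C.
  move=> zC; apply/setP => y; rewrite !wcE; move: zC; rewrite wcE => xz.
  apply/idP/idP => h; first exact: connect_trans xz h.
  by apply: connect_trans h; rewrite sym.
exists (fun y => if y \in C then f y else w' y); split.
  move=> y z yS zS /=.
  case: ifP => yC; case: ifP => zC.
  - exact: finj.
  - have zS' : z \in S' by rewrite inE zC zS.
    by move=> e1; have := fU y yC; rewrite inE e1 (imset_f w' zS').
  - have yS' : y \in S' by rewrite inE yC yS.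
    by move=> e1; have := fU z zC; rewrite inE -e1 (imset_f w' yS').
  - by apply: w1; rewrite inE ?yC ?zC.
move=> z zS; case: (boolP (z \in C)) => zC.
  rewrite (CE z zC) -[RHS]f3 big_enum /=.
  by apply: eq_bigr => y ->.
have zS' : z \in S' by rewrite inE zC zS.
rewrite -[RHS](w2 z zS'); apply: eq_bigr => y yz.
case: ifP => // yC; exfalso; move: zC; rewrite -(CE y yC).
by rewrite wcE sym -wcE yz.
Qed.

End Helpers.

Section Helpers2.
Set Implicit Arguments. Unset Strict Implicit. Unset Printing Implicit Defensive.
Import GRing.Theory.
Local Open Scope ring_scope.

Variables (V : finType) (a : rel V) (G : zmodType).

Definition dl (v : V) (g : G) : V -> G := fun u => if u == v then g else 0.

Definition realz (f : V -> G) := exists psi : V -> V -> G, forall u, weight a psi u = f u.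

Lemma realz_ext f f' : f =1 f' -> realz f -> realz f'.
Proof. by move=> E [psi H]; exists psi => u; rewrite H E. Qed.

Lemma realz0 : realz (fun _ => 0).
Proof. by exists (fun _ _ => 0) => u; rewrite /weight !big1 ?subr0. Qed.

Lemma realzD f1 f2 : realz f1 -> realz f2 -> realz (fun u => f1 u + f2 u).
Proof.
move=> [p1 H1] [p2 H2]; exists (fun x y => p1 x y + p2 x y) => u.
rewrite -H1 -H2 /weight !big_split /=; rewrite opprD !addrA; congr (_ + _).
by rewrite -!addrA; congr (_ + _); rewrite addrC.
Qed.

Lemma realz_sum (I : Type) (s : seq I) (F : I -> V -> G) :
  (forall i, realz (F i)) -> realz (fun u => \sum_(i <- s) F i u).
Proof.
move=> HF; elim: s => [|i s IH].
  by apply: realz_ext realz0 => u; rewrite big_nil.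
apply: realz_ext (realzD (HF i) IH) => u; by rewrite big_cons.
Qed.

Lemma weight_arc x z g : a x z ->
  realz (fun u => dl z g u - dl x g u).
Proof.
move=> axz; exists (fun p q => if (p == x) && (q == z) then g else 0) => u.
rewrite /weight /dl.
have -> : \sum_(y | a y u) (if (y == x) && (u == z) then g else 0) = if u == z then g else 0.
  case: (eqVneq u z) => [->|nuz].
    rewrite (bigD1 x) //= !eqxx /= big1 ?addr0 // => y /andP[_ /negbTE ->] //.
  by rewrite big1 // => y _; rewrite andbF.
have -> : \sum_(y | a u y) (if (u == x) && (y == z) then g else 0) = if u == x then g else 0.
  case: (eqVneq u x) => [->|nux].
    rewrite (bigD1 z) //= !eqxx /= big1 ?addr0 // => y /andP[_ /negbTE ->] //.
  by rewrite big1.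
by [].
Qed.

Lemma realz_edge x z g : underlying a x z -> realz (fun u => dl z g u - dl x g u).
Proof.
case/orP => [|azx]; first exact: weight_arc.
apply: realz_ext (weight_arc (- g) azx) => u; rewrite /dl.
case: (u == x); case: (u == z); rewrite ?subrr ?opprK ?sub0r ?subr0 ?oppr0 //.
all: by rewrite add0r.
Qed.

Lemma realz_connect x y g : connect (underlying a) x y -> realz (fun u => dl y g u - dl x g u).
Proof.
case/connectP => p; elim: p x => [|z p IH] x /=.
  by move=> _ ->; apply: realz_ext realz0 => u; rewrite subrr.
case/andP => exz pp ey.
apply: (realz_ext _ (realzD (IH z pp ey) (realz_edge g exz))) => u /=.
by rewrite addrA subrK.
Qed.

Lemma realize (w : V -> G) : (forall x, \sum_(y in wcomp a x) w y = 0) ->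
  exists psi, forall u, weight a psi u = w u.
Proof.
move=> Hw.
have sym : connect_sym (underlying a).
  by apply: sym_connect_sym => x y; rewrite /underlying orbC.
pose r := fingraph.root (underlying a).
have H1 : realz (fun u => \sum_(x <- enum V) (dl x (w x) u - dl (r x) (w x) u)).
  apply: realz_sum => x; apply: realz_connect.
  by rewrite sym connect_root.
apply: (realz_ext _ H1) => u /=.
have Z : \sum_(x <- enum V) dl (r x) (w x) u = 0.
  rewrite big_enum /= /dl -big_mkcond /=.
  case: (eqVneq (r u) u) => [ru|nru].
    rewrite -[RHS](Hw u); apply: eq_bigl => x; rewrite inE -{1}ru.
    by apply/eqP/idP => [/esym/(fingraph.rootP sym)|/(fingraph.rootP sym)/esym] //; rewrite sym.
  apply: big1 => x /eqP rxu; exfalso; move: nru.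
  by rewrite rxu /r (fingraph.root_root sym) eqxx.
rewrite big_split /= sumrN Z subr0 big_enum /= /dl -big_mkcond /=.
by rewrite (big_pred1 u) // => x; rewrite eq_sym.
Qed.

End Helpers2.

Theorem corollary4p5 (V : finType) (a : rel V) :
  loopless a ->
  (forall x : V, 4 <= #|wcomp a x|) ->
  forall G : finZmodType, 2 * #|V| + 1 <= #|G| ->
  exists psi : V -> V -> G, irregular_labeling a psi.
Proof.
move=> _ hc G hG.
have [w [winj wsum]] := zs hc hG.
have [psi hpsi] := realize wsum.
by exists psi => x y; rewrite !hpsi; exact: winj.
Qed.
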